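(* Suppose $S$ is totally ordered and $V\subset\mathcal H$ is dense in $\mathcal H$. If for every $\phi\in V\setminus\{0\}$ there is a probability measure $\mathbb P_\phi$ on $(\Omega,\Sigma)$ such that $$\mathbb P_\phi(X_{t_i}=a_i,\ i=1,\dots,k)=\|p^{t_k}_{a_k}\cdots p^{t_1}_{a_1}\hat\phi\|^2$$ for every $t_1<\dots<t_k$ in $S$ and every $a_i\in\Gamma(t_i)$, then $\mathcal H_\pi=\mathcal H$, i.e., $p^s_a$ and $p^t_b$ commute for all $s,t\in S$, $a\in\Gamma(s)$, $b\in\Gamma(t)$.
   Context: Let $\mathcal H$ be a complex Hilbert space. A projection is a bounded self-adjoint idempotent operator. For $\phi\neq0$, $\hat\phi=\phi/\|\phi\|$. Sums of countably many operators are understood strongly. Let $S$ be a set; for each $t\in S$ let $\Gamma(t)$ be a countable set and for $a\in\Gamma(t)$ let $p^t_a$ be a projection on $\mathcal H$ with $\sum_{a\in\Gamma(t)}p^t_a=I$. Let $\pi=\{p^t_a\}$. $\pi$ commutes on $\phi$ if $W\phi=V\phi$ whenever $W,V$ are finite products of elements of $\pi$ with the same factors (with multiplicity) in possibly different orders; $\mathcal H_\pi$ is the set of such $\phi$. Let $\Omega=\prod_{t\in S}\Gamma(t)$, $X_t(\omega)=\omega_t$, and $\Sigma$ the σ-algebra generated by the sets $\{X_t=a\}$; $\{X_{t_i}=a_i,\ i=1,\dots,k\}=\{\omega:\omega_{t_i}=a_i,\ i=1,\dots,k\}$. *)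

(* Defs.v *)
From HB Require Import structures.
From mathcomp Require Import all_boot all_order all_algebra.
From mathcomp Require Import all_classical all_reals all_analysis.
From mathcomp Require Import complex.

Set Implicit Arguments.
Unset Strict Implicit.
Unset Printing Implicit Defensive.

Import Order.TTheory GRing.Theory Num.Theory.
Local Open Scope classical_set_scope.
Local Open Scope ring_scope.
Local Open Scope complex_scope.

Definition hnorm (R : realType) (H : lmodType R[i]) (ip : H -> H -> R[i])
  (x : H) : R := Num.sqrt (complex.Re (ip x x)).

Definition is_complex_hilbert (R : realType) (H : lmodType R[i])
  (ip : H -> H -> R[i]) : Prop :=
  [/\ (forall (a : R[i]) (x y z : H), ip (a *: x + y) z = a * ip x z + ip y z),
      (forall x y : H, ip y x = conjc (ip x y)),
      (forall x : H, 0 <= complex.Re (ip x x)),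
      (forall x : H, ip x x = 0 -> x = 0) &
      (forall u : nat -> H,
         (forall e : R, 0 < e -> exists N : nat, forall m n : nat,
            (N <= m)%N -> (N <= n)%N -> hnorm ip (u m - u n) < e) ->
         exists l : H, forall e : R, 0 < e -> exists N : nat, forall n : nat,
            (N <= n)%N -> hnorm ip (u n - l) < e)].

Definition bounded_operator (R : realType) (H : lmodType R[i])
  (ip : H -> H -> R[i]) (f : H -> H) : Prop :=
  (forall (a : R[i]) (x y : H), f (a *: x + y) = a *: f x + f y) /\
  exists M : R, forall x : H, hnorm ip (f x) <= M * hnorm ip x.

Definition is_projection (R : realType) (H : lmodType R[i])
  (ip : H -> H -> R[i]) (f : H -> H) : Prop :=
  [/\ bounded_operator ip f,
      (forall x y : H, ip (f x) y = ip x (f y)) &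
      (forall x : H, f (f x) = f x)].

(** Strong (unconditional) convergence of the countable family
   [(q a x)_(a : I)] to [y]: the finite partial sums over finite index sets
   eventually containing any given finite set converge to [y]. *)
Definition strong_sum_to (R : realType) (H : lmodType R[i])
  (ip : H -> H -> R[i]) (I : countType) (q : I -> H -> H) (x y : H) : Prop :=
  forall e : R, 0 < e -> exists s0 : seq I, forall s : seq I,
    uniq s -> {subset s0 <= s} -> hnorm ip (\sum_(a <- s) q a x - y) < e.

Definition resolution_family (R : realType) (H : lmodType R[i])
  (ip : H -> H -> R[i]) (S : Type) (Gam : S -> countType)
  (p : forall t : S, Gam t -> H -> H) : Prop :=
  (forall (t : S) (a : Gam t), is_projection ip (p t a)) /\
  (forall (t : S) (x : H), strong_sum_to ip (p t) x x).

(** Applying a word of projections: [apply_word p [:: (t1,a1); ...; (tk,ak)] x]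
   is [p^{tk}_{ak} ( ... (p^{t1}_{a1} x))]. *)
Definition apply_word (H : Type) (S : Type) (Gam : S -> Type)
  (p : forall t : S, Gam t -> H -> H) (w : seq {t : S & Gam t}) (x : H) : H :=
  foldl (fun v (z : {t : S & Gam t}) => p (tag z) (tagged z) v) x w.

Definition commutes_on (H : Type) (S : eqType) (Gam : S -> countType)
  (p : forall t : S, Gam t -> H -> H) (x : H) : Prop :=
  forall w v : seq {t : S & Gam t}, perm_eq w v ->
    apply_word p w x = apply_word p v x.

Definition H_pi (H : Type) (S : eqType) (Gam : S -> countType)
  (p : forall t : S, Gam t -> H -> H) : set H := [set x | commutes_on p x].

Definition dense_in (R : realType) (H : lmodType R[i])
  (ip : H -> H -> R[i]) (V : set H) : Prop :=
  forall (x : H) (e : R), 0 < e -> exists v : H, V v /\ hnorm ip (x - v) < e.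

Definition cyl (S : eqType) (Gam : S -> eqType) (w : seq {t : S & Gam t})
  : set (forall t : S, Gam t) :=
  [set om | forall z, z \in w -> existT Gam (tag z) (om (tag z)) = z].

Definition Sigma_cyl (S : eqType) (Gam : S -> eqType)
  : set (set (forall t : S, Gam t)) :=
  <<s [set cyl [:: z] | z in [set: {t : S & Gam t}]] >>.

Definition is_probability_on (R : realType) (Om : Type) (Sig : set (set Om))
  (P : set Om -> \bar R) : Prop :=
  [/\ P set0 = 0%E,
      (forall A, Sig A -> (0 <= P A)%E),
      (forall F : nat -> set Om, (forall n, Sig (F n)) -> trivIset setT F ->
         (\sum_(0 <= i <oo) P (F i))%E = P (\bigcup_n F n)) &
      P setT = 1%E].

Definition hat (R : realType) (H : lmodType R[i]) (ip : H -> H -> R[i])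
  (x : H) : H := ((hnorm ip x)^-1)%:C *: x.

(* Main.v *)
Require Import Defs.
From HB Require Import structures.
From mathcomp Require Import all_boot all_order all_algebra.
From mathcomp Require Import all_classical all_reals all_analysis.
From mathcomp Require Import complex.
From mathcomp Require Import ring lra.

Import Order.TTheory GRing.Theory Num.Theory.
Local Open Scope classical_set_scope.
Local Open Scope ring_scope.
Lemma prob_add2 (R : realType) (Om : Type) (Sig : set (set Om)) (P : set Om -> \bar R) :
  sigma_algebra setT Sig -> is_probability_on Sig P ->
  forall A B, Sig A -> Sig B -> A `&` B = set0 -> P (A `|` B) = (P A + P B)%E.
Proof.
move=> sS [P0 Pge0 Padd PT] A B SA SB AB.
have S0 : Sig set0 by case: sS.
pose F n := if n == 0%N then A else if n == 1%N then B else set0.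
have SF n : Sig (F n) by rewrite /F; case: ifP => // _; case: ifP.
have tF : trivIset setT F.
  move=> i j _ _ [x [Fi Fj]].
  move: Fi Fj; rewrite /F.
  case: i => [|[|i]] /=; case: j => [|[|j]] //= Fi Fj.
  - by have : (A `&` B) x by []; rewrite AB.
  - by have : (A `&` B) x by []; rewrite AB.
have UF : \bigcup_n F n = A `|` B.
  apply/seteqP; split => x.
    by case=> -[|[|n]] _ //= Fx; [left|right].
  by case=> [Ax|Bx]; [exists 0%N|exists 1%N].
rewrite -UF -(Padd F SF tF).
rewrite (nneseries_split 0 2); last by move=> k _; exact: Pge0.
rewrite eseries0 ?adde0; last by move=> i /= i2 _; rewrite /F; case: i i2 => [|[|i]].
by rewrite add0n big_nat_recr //= big_nat_recr //= big_nil add0e.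
Qed.

Lemma prob_le (R : realType) (Om : Type) (Sig : set (set Om)) (P : set Om -> \bar R) :
  sigma_algebra setT Sig -> is_probability_on Sig P ->
  forall A B, Sig A -> Sig B -> A `<=` B -> (P A <= P B)%E.
Proof.
move=> sS hP A B SA SB AB.
have [_ _ _ SI] := (sigma_algebraP (fun X (_ : Sig X) => @subsetT _ X)).1 sS.
have SD : Sig (B `\` A).
  rewrite setDE; apply: SI => //; rewrite -setTD; by case: sS => _ + _; apply.
rewrite -(setDUK AB).
rewrite (@prob_add2 _ _ _ _ sS hP _ _ SA SD); last by rewrite setDE setICA setICr setI0.

by rewrite leeDl //; case: hP => _ + _ _; apply.
Qed.

Lemma cyl_facts (R : realType) (dS : Order.disp_t) (S : orderType dS) (Gam : S -> countType)
  (P : set (forall t : S, Gam t) -> \bar R) (f : seq {t : S & Gam t} -> R) :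
  is_probability_on (@Sigma_cyl S Gam) P ->
  (forall w : seq {t : S & Gam t}, w != [::] ->
     sorted (fun z1 z2 : {t : S & Gam t} => (tag z1 < tag z2)%O) w ->
     P (cyl w) = (f w)%:E) ->
  (forall s t (a : Gam s) (b : Gam t), (s < t)%O ->
     f [:: Tagged Gam a; Tagged Gam b] <= f [:: Tagged Gam b]) /\
  (forall s (a b : Gam s), a != b ->
     f [:: Tagged Gam a] + f [:: Tagged Gam b] <= 1).
Proof.
move=> hP hf.
have sS : sigma_algebra setT (@Sigma_cyl S Gam) := smallest_sigma_algebra _ _.
have [_ _ _ SI] := (sigma_algebraP (fun X (_ : Sigma_cyl X) => @subsetT _ X)).1 sS.
have S1 (z : {t : S & Gam t}) : @Sigma_cyl S Gam (cyl [:: z]) by apply: sub_sigma_algebra; exists z.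
split.
  move=> s t a b st.
  have E2 : cyl [:: Tagged Gam a; Tagged Gam b] = cyl [:: Tagged Gam a] `&` cyl [:: Tagged Gam b].
    apply/seteqP; split => om.
      by move=> h; split => z; rewrite inE => /eqP ->; apply: h; rewrite !inE eqxx ?orbT.
    by case=> h1 h2 z; rewrite !inE => /orP[] hz; [apply: h1|apply: h2]; rewrite inE.
  have le : (P (cyl [:: Tagged Gam a; Tagged Gam b]) <= P (cyl [:: Tagged Gam b]))%E.
    apply: (@prob_le _ _ _ _ sS hP) => //; first by rewrite E2; apply: SI.
    by rewrite E2 => om [].
  by move: le; rewrite !hf //= ?andbT ?lee_fin.
move=> s a b ab.
have D : cyl [:: Tagged Gam a] `&` cyl [:: Tagged Gam b] = set0.
  apply/seteqP; split => om // [h1 h2].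
  have e1 := h1 (Tagged Gam a) (mem_head _ _).
  have e2 := h2 (Tagged Gam b) (mem_head _ _).
  move: e1 e2 => /= -> /eqP; rewrite eq_Tagged /= => abe.
  by move: ab; rewrite abe.
have := @prob_add2 _ _ _ _ sS hP _ _ (S1 _) (S1 _) D.
rewrite !hf // => /esym E.
have := @prob_le _ _ _ _ sS hP (cyl [:: Tagged Gam a] `|` cyl [:: Tagged Gam b]) (setT).
case: hP => _ _ _ ->; rewrite -E -EFinD lee_fin; apply => //.
  rewrite -bigcup2E; apply: (@sigma_algebra_bigcup _ setT).
  by move=> [|[|n]] /=; [exact: S1|exact: S1|exact: sigma_algebra0].
by rewrite -(setD0 setT); apply: sigma_algebraCD; exact: sigma_algebra0.
Qed.
Local Open Scope complex_scope.

Section Lin.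
Variables (R : realType) (H : lmodType R[i]).
Definition islin (f : H -> H) := forall (a : R[i]) (x y : H), f (a *: x + y) = a *: f x + f y.
Variable f : H -> H.
Hypothesis hf : forall (a : R[i]) (x y : H), f (a *: x + y) = a *: f x + f y.
Lemma lin0 : f 0 = 0.
Proof. have := hf 1 0 0; rewrite scaler0 add0r scale1r => h. by apply: (@addrI _ (f 0)); rewrite -h addr0. Qed.
Lemma linD x y : f (x + y) = f x + f y.
Proof. by have := hf 1 x y; rewrite !scale1r. Qed.
Lemma linZ a x : f (a *: x) = a *: f x.
Proof. by rewrite -[a *: x]addr0 hf lin0 addr0. Qed.
Lemma linN x : f (- x) = - f x.
Proof. by rewrite -scaleN1r linZ scaleN1r. Qed.
Lemma linB x y : f (x - y) = f x - f y.
Proof. by rewrite linD linN. Qed.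
End Lin.

Lemma conjcD (R : realType) (a b : R[i]) : conjc (a + b) = conjc a + conjc b. Proof. exact: rmorphD. Qed.
Lemma conjcM (R : realType) (a b : R[i]) : conjc (a * b) = conjc a * conjc b. Proof. exact: rmorphM. Qed.
Lemma conjcN (R : realType) (a : R[i]) : conjc (- a) = - conjc a. Proof. exact: rmorphN. Qed.

Section IP.
Variables (R : realType) (H : lmodType R[i]) (ip : H -> H -> R[i]).
Hypothesis hip : is_complex_hilbert ip.
Definition qf x := complex.Re (ip x x).

Lemma ipD_l x y z : ip (x + y) z = ip x z + ip y z.
Proof. by case: hip => h _ _ _ _; rewrite -[x]scale1r h mul1r scale1r. Qed.
Lemma ip0_l z : ip 0 z = 0.
Proof. have := ipD_l 0 0 z; rewrite addr0 => h. by apply: (@addrI _ (ip 0 z)); rewrite -h addr0. Qed.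
Lemma ipZ_l a x z : ip (a *: x) z = a * ip x z.
Proof. by case: hip => h _ _ _ _; rewrite -[a *: x]addr0 h ip0_l addr0. Qed.
Lemma ipN_l x z : ip (- x) z = - ip x z.
Proof. by rewrite -scaleN1r ipZ_l mulN1r. Qed.
Lemma ipC x y : ip y x = conjc (ip x y).
Proof. by case: hip => _ h _ _ _; rewrite h. Qed.
Lemma ipD_r x y z : ip z (x + y) = ip z x + ip z y.
Proof. by rewrite ipC ipD_l conjcD -!ipC. Qed.
Lemma ipZ_r a x z : ip z (a *: x) = conjc a * ip z x.
Proof. by rewrite ipC ipZ_l conjcM -!ipC. Qed.
Lemma ipN_r x z : ip z (- x) = - ip z x.
Proof. by rewrite ipC ipN_l conjcN -!ipC. Qed.

Lemma ip_real x : ip x x = (qf x)%:C.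
Proof.
have := ipC x x; rewrite /qf; case: (ip x x) => a b /= [] hb.
have : b *+ 2 == 0 by rewrite mulr2n {1}hb addNr.
by rewrite mulrn_eq0 /= => /eqP ->.
Qed.
Lemma qf_ge0 x : 0 <= qf x.
Proof. by case: hip => _ _ h _ _; exact: h. Qed.
Lemma qf_eq0 x : qf x = 0 -> x = 0.
Proof. by case: hip => _ _ _ h _ q0; apply: h; rewrite ip_real q0. Qed.
Lemma hnorm_sq x : hnorm ip x ^+ 2 = qf x.
Proof. by rewrite /hnorm sqr_sqrtr // qf_ge0. Qed.
Lemma hnorm_ge0 x : 0 <= hnorm ip x.
Proof. exact: sqrtr_ge0. Qed.
Lemma qfN x : qf (- x) = qf x.
Proof. by rewrite /qf ipN_l ipN_r opprK. Qed.
Lemma qfZr (c : R) x : qf (c%:C *: x) = c ^+ 2 * qf x.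
Proof.
rewrite /qf ipZ_l ipZ_r conjc_real ip_real /=.
by rewrite !mulr0 !mul0r !subr0 mulrA expr2.
Qed.
Lemma qf_par x y : qf (x + y) <= 2%:R * qf x + 2%:R * qf y.
Proof.
have e : qf (x + y) + qf (x - y) = 2%:R * qf x + 2%:R * qf y.
  have e : ip (x + y) (x + y) + ip (x - y) (x - y) = 2%:R * ip x x + 2%:R * ip y y.
    rewrite !ipD_l !ipD_r !ipN_l !ipN_r; ring.
  move: e; rewrite !ip_real => /(congr1 (@complex.Re R)) /=.
  move=> ->; lra.
rewrite -e lerDl; exact: qf_ge0.
Qed.

Lemma ip0_r z : ip z 0 = 0.
Proof. by rewrite ipC ip0_l; exact: rmorph0. Qed.

Lemma bo_qf f : bounded_operator ip f ->
  exists C, 0 <= C /\ forall y, qf (f y) <= C * qf y.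
Proof.
case=> _ [M hM]; exists (M ^+ 2); split; first exact: sqr_ge0.
move=> y; rewrite -!hnorm_sq.
have h1 := hM y; have h0 := hnorm_ge0 (f y); have h2 := hnorm_ge0 y.
nra.
Qed.

Lemma dense_zero (V : set H) (f g : H -> H) :
  dense_in ip V ->
  (forall (a : R[i]) (x y : H), f (a *: x + y) = a *: f x + f y) ->
  (forall (a : R[i]) (x y : H), g (a *: x + y) = a *: g x + g y) ->
  (exists C, 0 <= C /\ forall y, qf (f y) <= C * qf y) ->
  (exists C, 0 <= C /\ forall y, qf (g y) <= C * qf y) ->
  (forall v, V v -> qf (f v) <= qf (g v)) ->
  forall x, g x = 0 -> f x = 0.
Proof.
move=> hV lf lg [Cf [Cf0 hCf]] [Cg [Cg0 hCg]] hfg x gx0.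
have key e : 0 < e -> qf (f x) <= (2%:R * Cg + 2%:R * Cf) * e.
  move=> e0.
  have se : 0 < Num.sqrt e by rewrite sqrtr_gt0.
  have [v [Vv hv]] := hV x (Num.sqrt e) se.
  move: hv; rewrite /hnorm ltr_sqrt // -/(qf _) => hv.
  set d := x - v.
  have xe : x = v + d by rewrite /d addrC subrK.
  have e1 : f x = f v + f d by rewrite xe (@linD _ _ _ lf).
  have e2 : g v = - g d by rewrite /d (@linB _ _ _ lg) gx0 sub0r opprK.
  have h1 := qf_par (f v) (f d).
  have h2 := hfg v Vv. rewrite e2 qfN in h2.
  have h3 := hCg d. have h4 := hCf d.
  have h5 := qf_ge0 d.
  rewrite e1. nra.
have q0 : qf (f x) = 0.
  apply/eqP; rewrite eq_le qf_ge0 andbT.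
  rewrite leNgt; apply/negP => qpos.
  set C := 2%:R * Cg + 2%:R * Cf.
  have C1 : 0 < C + 1 by rewrite /C; lra.
  have := key (qf (f x) / (C + 1)) (divr_gt0 qpos C1).
  have : qf (f x) / (C + 1) * (C + 1) = qf (f x) by rewrite divfK // gt_eqF.
  set e := qf (f x) / (C + 1).
  have : 0 < e by exact: divr_gt0.
  move=> e0 he hk; rewrite -/C in hk; clearbody e C; nra.
exact: qf_eq0.
Qed.

Lemma ip_eq0 w : (forall z, ip w z = 0) -> w = 0.
Proof. by case: hip => _ _ _ h _ hw; apply: h; apply: hw. Qed.

Lemma comm_ordered (V : set H) (P1 P2 : H -> H) :
  dense_in ip V -> is_projection ip P1 -> is_projection ip P2 ->
  (forall v, V v -> qf (P2 (P1 v)) <= qf (P2 v)) ->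
  forall y, P1 (P2 y) = P2 (P1 y).
Proof.
move=> hV [[l1 b1] s1 i1] [[l2 b2] s2 i2] hv.
have [C1 [C10 hC1]] := @bo_qf _ (conj l1 b1).
have [C2 [C20 hC2]] := @bo_qf _ (conj l2 b2).
have step1 x : P2 x = 0 -> P2 (P1 x) = 0.
  apply: (@dense_zero V (fun x => P2 (P1 x)) P2 hV) => //.
  - by move=> a x1 y1; rewrite l1 l2.
  - exists (C2 * C1); split; first exact: mulr_ge0.
    move=> z; apply: le_trans (hC2 _) _; rewrite -mulrA ler_wpM2l //.
  - by exists C2.
have step2 y0 : P2 (P1 y0) = P2 (P1 (P2 y0)).
  have := step1 (y0 - P2 y0).
  rewrite (@linB _ _ _ l2) i2 subrr => /(_ erefl).
  by rewrite (@linB _ _ _ l1) (@linB _ _ _ l2) => /eqP; rewrite subr_eq0 => /eqP.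
move=> y; apply/eqP; rewrite -subr_eq0; apply/eqP; apply: ip_eq0 => z.
rewrite ipD_l ipN_l; apply/eqP; rewrite subr_eq0; apply/eqP.
rewrite s1 s2 step2 -s2 -s1 -s2 -step2 //.
Qed.

Lemma orth_same (V : set H) (P1 P2 : H -> H) :
  dense_in ip V -> is_projection ip P1 -> is_projection ip P2 ->
  (forall v, V v -> qf (P1 v) + qf (P2 v) <= qf v) ->
  forall y, P2 (P1 y) = 0.
Proof.
move=> hV [[l1 b1] s1 i1] [[l2 b2] s2 i2] hv.
have pyth v : qf v = qf (P1 v) + qf (v - P1 v).
  have e : ip v v = ip (P1 v) (P1 v) + ip (v - P1 v) (v - P1 v).
    have -> : ip v v = ip (P1 v + (v - P1 v)) (P1 v + (v - P1 v)) by rewrite addrC subrK.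
    rewrite ipD_l !(ipD_r (P1 v) (v - P1 v)).
    have c1 : ip (P1 v) (v - P1 v) = 0 by rewrite s1 (@linB _ _ _ l1) i1 subrr ip0_r.
    have c2 : ip (v - P1 v) (P1 v) = 0 by rewrite -s1 (@linB _ _ _ l1) i1 subrr ip0_l.
    by rewrite c1 c2 addr0 add0r.
  by move: e; rewrite !ip_real => /(congr1 (@complex.Re R)) /=.
have [C2 [C20 hC2]] := @bo_qf _ (conj l2 b2).
have step x : x - P1 x = 0 -> P2 x = 0.
  apply: (@dense_zero V P2 (fun x => x - P1 x) hV) => //.
  - by move=> a x1 y1; rewrite l1 scalerBr opprD addrACA.
  - by exists C2.
  - exists 1; split => // z; rewrite mul1r (pyth z) lerDr; exact: qf_ge0.
  - move=> v Vv; have := hv v Vv; rewrite (pyth v); lra.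
move=> y; apply: step; by rewrite i1 subrr.
Qed.
End IP.
Local Close Scope complex_scope.
Lemma perm_apply (S : eqType) (Gam : S -> countType) (H : Type)
  (p : forall t : S, Gam t -> H -> H) :
  (forall (z1 z2 : {t : S & Gam t}) x,
     p (tag z1) (tagged z1) (p (tag z2) (tagged z2) x) =
     p (tag z2) (tagged z2) (p (tag z1) (tagged z1) x)) ->
  forall w v, perm_eq w v -> forall x, apply_word p w x = apply_word p v x.
Proof.
move=> hc.
have cons_comm (z : {t : S & Gam t}) : forall (w : seq {t : S & Gam t}) (x : H), apply_word p w (p (tag z) (tagged z) x) =
    p (tag z) (tagged z) (apply_word p w x).
  elim=> [//|y w IH] x /=; rewrite /apply_word /= -/(apply_word p w _).
  by rewrite hc IH.
elim=> [|z w IH] v.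
  by move=> /perm_size/esym/size0nil ->.
move=> pv x.
have zv : z \in v by rewrite -(perm_mem pv) mem_head.
case/splitPr: zv pv => v1 v2 pv.
have pw : perm_eq w (v1 ++ v2).
  by rewrite -(perm_cons z); apply: (perm_trans pv); rewrite perm_sym -cat1s perm_catCA.
have e1 : apply_word p (z :: w) x = apply_word p w (p (tag z) (tagged z) x) by [].
have e2 : apply_word p (v1 ++ z :: v2) x =
    apply_word p v2 (p (tag z) (tagged z) (apply_word p v1 x)).
  by rewrite /apply_word foldl_cat.
have e3 : apply_word p (v1 ++ v2) x = apply_word p v2 (apply_word p v1 x).
  by rewrite /apply_word foldl_cat.
by rewrite e1 e2 !cons_comm (IH _ pw) e3.
Qed.

Theorem theorem7 (R : realType) (H : lmodType R[i]) (ip : H -> H -> R[i])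
  (dS : Order.disp_t) (S : orderType dS) (Gam : S -> countType)
  (p : forall t : S, Gam t -> H -> H) (V : set H) :
  is_complex_hilbert ip ->
  resolution_family ip p ->
  dense_in ip V ->
  (forall phi : H, V phi -> phi != 0 ->
     exists P : set (forall t : S, Gam t) -> \bar R,
       is_probability_on (@Sigma_cyl S Gam) P /\
       (forall w : seq {t : S & Gam t},
          w != [::] ->
          sorted (fun z1 z2 : {t : S & Gam t} => (tag z1 < tag z2)%O) w ->
          P (cyl w) = ((hnorm ip (apply_word p w (hat ip phi))) ^+ 2)%:E)) ->
  H_pi p = [set: H] /\
  (forall (s t : S) (a : Gam s) (b : Gam t) (x : H),
     p s a (p t b x) = p t b (p s a x)).
Proof.
move=> hip [hproj hres] hV hP.
have lin s (a : Gam s) : forall (c : R[i]) (x y : H), p s a (c *: x + y) = c *: p s a x + p s a y.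
  by case: (hproj s a) => -[].
have cpos v : v != 0 -> 0 < ((hnorm ip v)^-1) ^+ 2.
  move=> v0; apply: exprn_gt0; rewrite invr_gt0 /hnorm sqrtr_gt0 lt_def (@qf_ge0 _ _ _ hip) andbT.
  by apply/eqP => /(@qf_eq0 _ _ _ hip); apply/eqP.
have hatE v : hat ip v = (((hnorm ip v)^-1)%:C)%C *: v by [].
have hyp1 s t (a : Gam s) (b : Gam t) : (s < t)%O ->
    forall v, V v -> @qf _ _ ip (p t b (p s a v)) <= @qf _ _ ip (p t b v).
  move=> st v Vv; have [->|v0] := eqVneq v 0; first by rewrite !(@lin0 _ _ _ (lin _ _)).
  have [P [hPr hPf]] := hP v Vv v0.
  have [c1 _] := @cyl_facts _ _ _ _ P (fun w => hnorm ip (apply_word p w (hat ip v)) ^+ 2) hPr hPf.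
  have := c1 s t a b st; rewrite /= !(@hnorm_sq _ _ _ hip) hatE !(@linZ _ _ _ (lin _ _)) !(@qfZr _ _ _ hip).
  by rewrite ler_pM2l // cpos.
have hyp2 s (a b : Gam s) : a != b ->
    forall v, V v -> @qf _ _ ip (p s a v) + @qf _ _ ip (p s b v) <= @qf _ _ ip v.
  move=> ab v Vv; have [->|v0] := eqVneq v 0.
    by rewrite !(@lin0 _ _ _ (lin _ _)) /qf (@ip0_l _ _ _ hip) addr0.
  have [P [hPr hPf]] := hP v Vv v0.
  have [_ c2] := @cyl_facts _ _ _ _ P (fun w => hnorm ip (apply_word p w (hat ip v)) ^+ 2) hPr hPf.
  have := c2 s a b ab; rewrite /= !(@hnorm_sq _ _ _ hip) hatE !(@linZ _ _ _ (lin _ _)) !(@qfZr _ _ _ hip).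
  have e1 : ((hnorm ip v)^-1) ^+ 2 * @qf _ _ ip v = 1.
    rewrite exprVn (@hnorm_sq _ _ _ hip) mulVf //.
    by apply/eqP => /(@qf_eq0 _ _ _ hip); apply/eqP.
  by rewrite -mulrDr -{1}e1 ler_pM2l // cpos.
have comm s t (a : Gam s) (b : Gam t) x : p s a (p t b x) = p t b (p s a x).
  case: (ltgtP s t) => [st|ts|e].
  - exact: (@comm_ordered _ _ _ hip V _ _ hV (hproj s a) (hproj t b) (hyp1 s t a b st)).
  - exact/esym/(@comm_ordered _ _ _ hip V _ _ hV (hproj t b) (hproj s a) (hyp1 t s b a ts)).
  - subst t; have [->//|ab] := eqVneq a b.
    rewrite (@orth_same _ _ _ hip V _ _ hV (hproj s a) (hproj s b) (hyp2 s a b ab)).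
    rewrite (@orth_same _ _ _ hip V _ _ hV (hproj s b) (hproj s a) (hyp2 s b a _)) //.
    by rewrite eq_sym.
split => //.
apply/seteqP; split => // x _ w v pwv.
apply: perm_apply pwv x => z1 z2 x; exact: comm.
Qed.
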